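(* Let $n\ge 1$ and let $G$ be a subgame with $|G|\le n$. For integers $d\ge 0$, $\ell\ge 0$, let $R(d,\ell)$ be the maximal total number of calls to $\mathrm{Solve}_\mathsf{E}$ and $\mathrm{Solve}_\mathsf{O}$ of Algorithm 2 (including the initial call) performed during an execution of $\mathrm{Solve}_\mathsf{E}(G,d,p_\mathsf{E},p_\mathsf{O})$ if $d$ is even, or of $\mathrm{Solve}_\mathsf{O}(G,d,p_\mathsf{O},p_\mathsf{E})$ if $d$ is odd, over all such subgames $G$ with priorities at most $d$ and all integers $p_\mathsf{E},p_\mathsf{O}\ge1$ with $\lfloor\log_2 p_\mathsf{E}\rfloor+\lfloor\log_2 p_\mathsf{O}\rfloor=\ell$. Then $R(d,\ell)\le 2\,n^{\ell}\binom{d+\ell}{\ell}-1$.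
   Context: A parity game is $\mathcal{G}=(V,V_\mathsf{E},E,\pi)$: $(V,E)$ a finite directed graph without self-loops, every vertex having a successor; $\pi\colon V\to\{1,\dots,d\}$ positive priorities; $V_\mathsf{E}$ Even's vertices, $V_\mathsf{O}=V\setminus V_\mathsf{E}$ Odd's vertices. A subgame is given by $G\subseteq V$ in which every vertex has a successor in $G$. $\mathrm{Attr}_\wp(S,G)$ is the set of vertices from which player $\wp$ has a strategy in $G$ agreeing only with plays reaching $S$. Algorithm 2. $\mathrm{Solve}_\mathsf{E}(G,d,p_\mathsf{E},p_\mathsf{O})$ (for even $d$): if $G=\emptyset$ or $p_\mathsf{E}\le 1$, return $\emptyset$. Otherwise: repeat $\{N_d:=\{v\in G:\pi(v)=d\}$; $H:=G\setminus\mathrm{Attr}_\mathsf{E}(N_d,G)$; $W_\mathsf{O}:=\mathrm{Solve}_\mathsf{O}(H,d-1,\lfloor p_\mathsf{O}/2\rfloor,p_\mathsf{E})$; $G:=G\setminus\mathrm{Attr}_\mathsf{O}(W_\mathsf{O},G)\}$ until $W_\mathsf{O}=\emptyset$. Then (with $H$ from the last repeat iteration) $W_\mathsf{O}:=\mathrm{Solve}_\mathsf{O}(H,d-1,p_\mathsf{O},p_\mathsf{E})$; $G:=G\setminus\mathrm{Attr}_\mathsf{O}(W_\mathsf{O},G)$. Then while $W_\mathsf{O}\ne\emptyset$: $\{N_d:=\{v\in G:\pi(v)=d\}$; $H:=G\setminus\mathrm{Attr}_\mathsf{E}(N_d,G)$; $W_\mathsf{O}:=\mathrm{Solve}_\mathsf{O}(H,d-1,\lfloor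 p_\mathsf{O}/2\rfloor,p_\mathsf{E})$; $G:=G\setminus\mathrm{Attr}_\mathsf{O}(W_\mathsf{O},G)\}$. Return $G$. $\mathrm{Solve}_\mathsf{O}(G,d,p_\mathsf{O},p_\mathsf{E})$ (for odd $d$) is the dual, obtained by swapping the roles of Even and Odd: it returns $\emptyset$ if $G=\emptyset$ or $p_\mathsf{O}\le 1$; otherwise it uses $H:=G\setminus\mathrm{Attr}_\mathsf{O}(N_d,G)$, $W_\mathsf{E}:=\mathrm{Solve}_\mathsf{E}(H,d-1,\lfloor p_\mathsf{E}/2\rfloor,p_\mathsf{O})$ in both loops, $W_\mathsf{E}:=\mathrm{Solve}_\mathsf{E}(H,d-1,p_\mathsf{E},p_\mathsf{O})$ in the middle step, and updates $G:=G\setminus\mathrm{Attr}_\mathsf{E}(W_\mathsf{E},G)$. *)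

(* Defs.v *)
From mathcomp Require Import all_boot.
Set Implicit Arguments. Unset Strict Implicit. Unset Printing Implicit Defensive.

Section ParityGames.
Variables (T : finType) (VE : {set T}) (E : rel T) (pi : T -> nat).

(* Player encoding: [false] = Even, [true] = Odd. *)
Definition owned (odd_player : bool) : {set T} := if odd_player then ~: VE else VE.

Definition subgame (G : {set T}) : Prop :=
  forall v, v \in G -> exists w, E v w && (w \in G).

Definition attr_step (pl : bool) (G A : {set T}) : {set T} :=
  A :|: [set v in G | if v \in owned pl
                      then [exists w, [&& E v w, w \in G & w \in A]]
                      else [forall w, (E v w && (w \in G)) ==> (w \in A)]].

(* Attr_pl(S, G): least fixpoint, reached after at most #|T| steps. *)
Definition attr (pl : bool) (S G : {set T}) : {set T} :=
  iter #|T| (attr_step pl G) (S :&: G).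

(* H := G \ Attr_pl(N_d, G), pl the player of parity d. *)
Definition remove_top (d : nat) (G : {set T}) : {set T} :=
  G :\: attr (odd d) [set v in G | pi v == d] G.

(* The body "N_d := ..; H := ..; W := f H; G := G \ Attr_opp(W, G)" repeated
   until W = set0 (with fuel). Returns (final G, last H, accumulated count). *)
Fixpoint rep_loop (d : nat) (f : {set T} -> {set T} * nat) (fuel : nat)
    (G : {set T}) (c : nat) : {set T} * {set T} * nat :=
  match fuel with
  | 0 => (G, remove_top d G, c)
  | fuel'.+1 =>
    let H := remove_top d G in
    let W := (f H).1 in
    let G' := G :\: attr (~~ odd d) W G in
    if W == set0 then (G', H, c + (f H).2)
    else rep_loop d f fuel' G' (c + (f H).2)
  end.

(* solve d G pa pb = Solve_E(G,d,pa,pb) if d is even, Solve_O(G,d,pa,pb) if d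
   is odd (pa is the parameter of the player of parity d, pb the opponent's).
   Returns the computed set together with the total number of calls made
   (including this one). The case d = 0 with G nonempty never occurs when
   priorities are positive and at most d. *)
Fixpoint solve (d : nat) (G : {set T}) (pa pb : nat) {struct d}
    : {set T} * nat :=
  if (G == set0) || (pa <= 1) then (set0, 1) else
  match d with
  | 0 => (set0, 1)
  | d'.+1 =>
    let half := fun H => solve d' H (pb %/ 2) pa in
    let full := fun H => solve d' H pb pa in
    let '(G1, H1, c1) := rep_loop d half #|T|.+1 G 0 in
    let W2 := (full H1).1 in
    let c2 := (full H1).2 in
    let G2 := G1 :\: attr (~~ odd d) W2 G1 in
    if W2 == set0 then (G2, 1 + c1 + c2)
    else let '(G3, _, c3) := rep_loop d half #|T|.+1 G2 0 in
         (G3, 1 + c1 + c2 + c3)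
  end.

Definition num_calls (d : nat) (G : {set T}) (pE pO : nat) : nat :=
  if odd d then (solve d G pO pE).2 else (solve d G pE pO).2.

End ParityGames.

(* Main.v *)
Require Import Defs.
From mathcomp Require Import all_boot.
From mathcomp Require Import zify.

Lemma attr_sup (T : finType) (VE : {set T}) (E : rel T) pl (S G : {set T}) :
  S :&: G \subset attr VE E pl S G.
Proof.
rewrite /attr; elim: #|T| => //= k IH.
exact: subset_trans IH (subsetUl _ _).
Qed.

Lemma rep_loop_sub (T : finType) (VE : {set T}) (E : rel T) (pi : T -> nat) d f fuel
  (G : {set T}) c : (rep_loop VE E pi d f fuel G c).1.1 \subset G.
Proof.
elim: fuel G c => [|k IH] G c /=; first exact: subxx.
case: ifP => _; first exact: subsetDl.
exact: subset_trans (IH _ _) (subsetDl _ _).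
Qed.

Lemma solveS (T : finType) (VE : {set T}) (E : rel T) (pi : T -> nat) d
  (G : {set T}) pa pb : solve VE E pi d.+1 G pa pb =
  if (G == set0) || (pa <= 1) then (set0, 1) else
    let half := fun H => solve VE E pi d H (pb %/ 2) pa in
    let full := fun H => solve VE E pi d H pb pa in
    let '(G1, H1, c1) := rep_loop VE E pi d.+1 half #|T|.+1 G 0 in
    let W2 := (full H1).1 in
    let c2 := (full H1).2 in
    let G2 := G1 :\: attr VE E (~~ odd d.+1) W2 G1 in
    if W2 == set0 then (G2, 1 + c1 + c2)
    else let '(G3, _, c3) := rep_loop VE E pi d.+1 half #|T|.+1 G2 0 in
         (G3, 1 + c1 + c2 + c3).
Proof. by []. Qed.

Lemma solve_small (T : finType) (VE : {set T}) (E : rel T) (pi : T -> nat) d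
  (G : {set T}) pa pb : (G == set0) || (pa <= 1) -> solve VE E pi d G pa pb = (set0, 1).
Proof. by case: d => [|d] /= ->. Qed.

Lemma solve_sub (T : finType) (VE : {set T}) (E : rel T) (pi : T -> nat) d
  (G : {set T}) pa pb : (solve VE E pi d G pa pb).1 \subset G.
Proof.
case: d => [|d]; first by rewrite /=; case: ifP; rewrite sub0set.
rewrite solveS; case: ifP => _; first by rewrite sub0set.
cbv zeta; case E1: (rep_loop VE E pi d.+1 _ _ _ _) => [[G1 H1] c1].
have s1 : G1 \subset G by have := rep_loop_sub _ VE E pi d.+1 (fun H => solve VE E pi d H (pb %/ 2) pa) #|T|.+1 G 0; rewrite E1.
case: ifP => _; first exact: subset_trans (subsetDl _ _) s1.
case E2: (rep_loop VE E pi d.+1 _ _ _ _) => [[G3 H3] c3].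
have := rep_loop_sub _ VE E pi d.+1 (fun H => solve VE E pi d H (pb %/ 2) pa) #|T|.+1 (G1 :\: attr VE E (~~ odd d.+1) (solve VE E pi d H1 pb pa).1 G1) 0.
rewrite E2 /= => s3.
exact: subset_trans s3 (subset_trans (subsetDl _ _) s1).
Qed.

Lemma rep_loop_cost (T : finType) (VE : {set T}) (E : rel T) (pi : T -> nat) (d : nat)
  (f : {set T} -> {set T} * nat) (h : nat) (G0 : {set T}) :
  0 < h ->
  (forall H : {set T}, H \subset G0 -> (f H).1 \subset H /\ (f H).2 <= h /\ (H = set0 -> (f H).2 <= 1)) ->
  forall fuel (G : {set T}) (c : nat), G \subset G0 ->
  exists GL : {set T}, [/\ (rep_loop VE E pi d f fuel G c).1.1 \subset GL, GL \subset G,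
    (rep_loop VE E pi d f fuel G c).1.2 \subset GL &
    (rep_loop VE E pi d f fuel G c).2 + h * #|GL| <= c + h * #|G| + (if GL == set0 then 1 else h)].
Proof.
move=> hpos Hf; elim=> [|k IH] G c sG.
  exists G; split => /=; [exact: subxx|exact: subxx|exact: subsetDl|lia].
rewrite /=.
set H := remove_top VE E pi d G.
have sH : H \subset G by exact: subsetDl.
have [s1 [c2 c3]] := Hf H (subset_trans sH sG).
case: eqP => W0.
  exists G; split => /=; [exact: subsetDl|exact: subxx|exact: sH|].
  case: eqP => G0e.
    have H0 : H = set0 by apply/eqP; rewrite -subset0 -G0e.
    have := c3 H0; lia.
  lia.
set G' := G :\: _.
have sG' : G' \subset G by exact: subsetDl.
have [GL [a1 a2 a3 a4]] := IH G' (c + (f H).2) (subset_trans sG' sG).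
exists GL; split => //; first exact: subset_trans a2 sG'.
have pr : G' \proper G.
  apply/properP; split => //.
  have /set0Pn [w wW] : (f H).1 != set0 by apply/eqP.
  have wG : w \in G by apply: (subsetP sH); apply: (subsetP s1).
  exists w => //.
  rewrite /G' inE negb_and negbK; apply/orP; left.
  by apply: (subsetP (attr_sup _ _ _ _ _ _)); rewrite inE wW wG.
have := proper_card pr.
move: a4; set e := (if _ then _ else _) => a4 ltc.
have : h * #|G'| + h <= h * #|G| by rewrite -mulnSr leq_mul2l ltc orbT.
lia.
Qed.

Lemma numeric n d l : 2 <= n ->
  2 + n * (2 * n ^ l * 'C(d + l, l) - 1) + (2 * n ^ l.+1 * 'C(d + l.+1, l.+1) - 1)
  <= 2 * n ^ l.+1 * 'C(d.+1 + l.+1, l.+1) - 1.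
Proof.
move=> n2.
have -> : d.+1 + l.+1 = (d + l.+1).+1 by lia.
rewrite binS expnS.
have b1 : 'C(d + l, l) <= 'C(d + l.+1, l) by apply: leq_bin2l; lia.
have b0 : 0 < 'C(d + l, l) by rewrite bin_gt0; lia.
have x0 : 0 < n ^ l by rewrite expn_gt0; lia.
set X := n ^ l in x0 *; set a := 'C(d + l, l) in b1 b0 *;
set a' := 'C(d + l.+1, l) in b1 *; set b := 'C(d + l.+1, l.+1).
have e1 : n * (2 * X * a - 1) = 2 * (n * X * a) - n by rewrite mulnBr muln1 !mulnA (mulnC n 2).
have e2 : 2 * (n * X) * (b + a') = 2 * (n * X * b) + 2 * (n * X * a') by rewrite mulnDr !mulnA.
have e3 : 2 * (n * X) * b = 2 * (n * X * b) by rewrite !mulnA.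
have pq : n * X * a <= n * X * a' by rewrite leq_mul2l b1 orbT.
have p1 : 1 <= n * X * a by rewrite !muln_gt0 x0 b0 andbT; lia.
have p2 : 1 <= n * X * b.
  rewrite !muln_gt0 x0 /= bin_gt0; apply/andP; split; lia.
rewrite e1 e2 e3; lia.
Qed.

Lemma solve_bound (T : finType) (VE : {set T}) (E : rel T) (pi : T -> nat) n :
  2 <= n -> forall d l (G : {set T}) pa pb, #|G| <= n ->
  trunc_log 2 pa + trunc_log 2 pb <= l ->
  (solve VE E pi d G pa pb).2 <= 2 * n ^ l * 'C(d + l, l) - 1.
Proof.
move=> n2.
have gpos : forall d l, 1 <= 2 * n ^ l * 'C(d + l, l) - 1.
  move=> d l.
  have b0 : 0 < 'C(d + l, l) by rewrite bin_gt0; lia.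
  have x0 : 0 < n ^ l by rewrite expn_gt0; lia.
  nia.
elim=> [|d IH] l G pa pb Gn Hl.
  by rewrite /=; case: ifP => _; apply: gpos.
rewrite solveS; case: ifP => Hc; first exact: gpos.
move: Hc => /norP [/eqP Gne /negbTE pa2]; rewrite leqNgt in pa2; move/negbFE: pa2 => pa2.
have tpa : 1 <= trunc_log 2 pa by rewrite trunc_log_gt0.
case: l Hl => [|l] Hl; first lia.
set half := fun H => solve VE E pi d H (pb %/ 2) pa.
have Hf : forall H : {set T}, H \subset G -> (half H).1 \subset H /\ (half H).2 <= 2 * n ^ l * 'C(d + l, l) - 1 /\ (H = set0 -> (half H).2 <= 1).
  move=> H sH; split; first exact: solve_sub.
  split; last by move=> ->; rewrite /half solve_small ?eqxx.
  case: (leqP pb 1) => pb1.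
    rewrite /half solve_small; first exact: gpos.
    by apply/orP; right; apply: leq_trans (leq_div _ _) pb1.
  apply: IH; first by apply: leq_trans (subset_leq_card sH) Gn.
  rewrite (trunc_log2S pb1) -divn2 in Hl; lia.
have hpos : 0 < 2 * n ^ l * 'C(d + l, l) - 1 by apply: gpos.
have Hfull : forall H : {set T}, H \subset G -> (solve VE E pi d H pb pa).2 <= 2 * n ^ l.+1 * 'C(d + l.+1, l.+1) - 1.
  move=> H sH; apply: IH; first by apply: leq_trans (subset_leq_card sH) Gn.
  lia.
have [GL [a1 a2 a3 a4]] := rep_loop_cost _ VE E pi d.+1 half _ G hpos Hf #|T|.+1 G 0 (subxx G).
have num := numeric n d l n2.
set h := 2 * n ^ l * 'C(d + l, l) - 1 in num Hf hpos a4 *.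
have hG : h * #|G| <= h * n by rewrite leq_mul2l Gn orbT.
cbv zeta; case E1: (rep_loop VE E pi d.+1 _ _ _ _) => [[G1 H1] c1].
rewrite E1 /= in a1 a3 a4.
have sH1 : H1 \subset G by exact: subset_trans a3 a2.
have cf := Hfull _ sH1.
case: ifP => W2; first rewrite /=.
  case: eqP a4 => GLe a4.
    rewrite GLe cards0 in a4; lia.
  have : h * #|GL| <= h * #|G| by rewrite leq_mul2l subset_leq_card ?orbT.
  have : h <= h * #|GL|.
    rewrite -{1}(muln1 h) leq_mul2l card_gt0; apply/orP; right; exact/eqP.
  lia.
set G2 := G1 :\: _.
have sG2 : G2 \subset G by exact: subset_trans (subsetDl _ _) (subset_trans a1 a2).
have [GL2 [b1 b2 b3 b4]] := rep_loop_cost _ VE E pi d.+1 half _ G hpos Hf #|T|.+1 G2 0 sG2.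
case E2: (rep_loop VE E pi d.+1 _ _ _ _) => [[G3 H3] c3] /=.
rewrite E2 /= in b4.
have c3b : c3 <= h * #|G2| + 1.
  case: eqP b4 => GL2e b4; first lia.
  have : h <= h * #|GL2|.
    rewrite -{1}(muln1 h) leq_mul2l card_gt0; apply/orP; right; exact/eqP.
  lia.
have pr : G2 \proper GL.
  apply/properP; split; first exact: subset_trans (subsetDl _ _) a1.
  have /set0Pn [w wW] : (solve VE E pi d H1 pb pa).1 != set0 by rewrite W2.
  have wH : w \in H1 := subsetP (solve_sub _ VE E pi d H1 pb pa) w wW.
  have wGL : w \in GL by apply: (subsetP a3).
  exists w => //.
  rewrite /G2 inE negb_and negbK.
  case wG1: (w \in G1); last by rewrite orbT.
  by apply/orP; left; apply: (subsetP (attr_sup _ _ _ _ _ _)); rewrite inE wW wG1.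
have := proper_card pr => lt2.
have GLn : GL != set0.
  apply/set0Pn; case/properP: pr => _ [w wGL _]; by exists w.
rewrite (negbTE GLn) in a4.
have : h * #|G2| + h <= h * #|GL| by rewrite -mulnSr leq_mul2l lt2 orbT.
lia.
Qed.

Theorem mainTheorem7 (T : finType) (VE : {set T}) (E : rel T) (pi : T -> nat)
    (no_self_loop : forall v, ~~ E v v)
    (has_succ : forall v, exists w, E v w)
    (pi_pos : forall v, 0 < pi v)
    (n : nat) (n_ge1 : 1 <= n)
    (G : {set T}) (G_sub : subgame E G) (G_card : #|G| <= n)
    (d l pE pO : nat) (G_prio : forall v, v \in G -> pi v <= d)
    (pE_ge1 : 1 <= pE) (pO_ge1 : 1 <= pO)
    (Hl : trunc_log 2 pE + trunc_log 2 pO = l) :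
  num_calls VE E pi d G pE pO <= 2 * n ^ l * 'C(d + l, l) - 1.
Proof.
case: (leqP 2 n) => n2.
  rewrite /num_calls; case: ifP => _; apply: solve_bound => //; lia.
have G0 : G = set0.
  case: (set_0Vmem G) => [//|[v vG]].
  have [w /andP [evw wG]] := G_sub v vG.
  have G1 : #|G| <= 1 by lia.
  have vw : v = w by move/card_le1_eqP: G1 => h; exact: h.
  by move: (no_self_loop v); rewrite {2}vw evw.
have b0 : 0 < 'C(d + l, l) by rewrite bin_gt0; lia.
have x0 : 0 < n ^ l by rewrite expn_gt0; lia.
rewrite /num_calls !solve_small ?G0 ?eqxx //; case: ifP => _ /=; nia.
Qed.
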